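(* Let $G$ be a graph with $n=|V(G)|$ vertices and $m=|E(G)|$ edges, with vertex and edge labels $\tau:V(G)\cup E(G)\to\mathcal L$ from a finite alphabet $\mathcal L$, and let $\ell\ge0$. Consider the algorithm that initializes, for each $v\in V(G)$, a sparse vector $\Phi^v_0$ over label sequences with $\Phi^v_0(\tau(v))=1$, and for $i=1,\dots,\ell$, for all $u\in V(G)$, $v\in N(u)$ and all label sequences $s$ with $\Phi^v_{i-1}(s)>0$, sets $s'\gets(\tau(u),\tau(uv))$ concatenated with $s$ and increases $\Phi^u_i(s')$ by $\Phi^v_{i-1}(s)$; finally it returns $\sum_{v\in V(G)}\Phi^v_\ell$. This algorithm computes the feature vector $\phi^=_\ell(G)$ in time $O(n+\ell(n+m)s)$, where $s$ is the maximum number of different label sequences of $(\ell-1)$-walks starting at a vertex of $G$.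
   Context: Graphs are finite and undirected; $N(u)$ is the neighborhood of $u$. A walk of length $\ell$ is a sequence $w=(v_0,e_1,v_1,\dots,e_\ell,v_\ell)$ with $e_i=v_{i-1}v_i\in E(G)$; its label sequence is $\tau(w)=(\tau(v_0),\tau(e_1),\dots,\tau(v_\ell))\in\mathcal L^{2\ell+1}$. The feature vector $\phi^=_\ell(G)$ has one component for each $s\in\mathcal L^{2\ell+1}$, equal to the number of walks $w$ of length $\ell$ in $G$ with $\tau(w)=s$; it is a feature map of the $\ell$-walk kernel with Dirac vertex and edge kernels on labels, $K^=_\ell(G,H)=\sum_{w\in\mathcal W_\ell(G)}\sum_{w'\in\mathcal W_\ell(H)}\prod_{i=0}^{\ell}\delta(\tau(v_i),\tau(v'_i))\prod_{i=1}^{\ell}\delta(\tau(e_i),\tau(e'_i))$, where $\delta(a,b)=1$ if $a=b$ and $0$ otherwise. Feature vectors are stored sparsely (e.g. in hash tables keyed by label sequences). *)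

(* Defs.v *)
From mathcomp Require Import all_boot.
Set Implicit Arguments. Unset Strict Implicit. Unset Printing Implicit Defensive.

(* A labeled graph: vertex type V (finite), adjacency relation e (assumed
   symmetric and irreflexive in the theorem), vertex labels tauV : V -> L and
   edge labels tauE : {set V} -> L (an edge uv is the 2-set [set u; v]). *)

Section Walks.
Variables (L V : finType) (e : rel V) (tauV : V -> L) (tauE : {set V} -> L).

Definition nverts : nat := #|V|.
Definition edges : {set {set V}} :=
  [set [set x; y] | x in [set: V], y in [set: V] & e x y].
Definition nedges : nat := #|edges|.

(* A walk of length l is the vertex sequence v_0 ... v_l (edges are
   determined by consecutive vertices since the graph is simple). *)
Definition is_walk (l : nat) (w : l.+1.-tuple V) : bool :=
  path e (thead w) (behead w).

Definition wlabel (l : nat) (w : l.+1.-tuple V) : seq L :=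
  tauV (thead w) ::
  flatten [seq [:: tauE [set p.1; p.2]; tauV p.2]
          | p <- zip (thead w :: behead w) (behead w)].

Definition phi_eq (l : nat) (s : seq L) : nat :=
  #|[set w : l.+1.-tuple V | is_walk w && (wlabel w == s)]|.

Definition nlabseq_from (k : nat) (v : V) : nat :=
  size (undup [seq wlabel w | w <- enum [set w : k.+1.-tuple V |
                                           is_walk w && (thead w == v)]]).

Definition smax (l : nat) : nat :=
  maxn 1 (\max_(v : V) nlabseq_from l.-1 v).

(* ---------- Sparse vectors (hash tables modeled as association lists) *)
Definition sv := seq (seq L * nat).

Fixpoint sv_get (t : sv) (s : seq L) : nat :=
  match t with
  | [::] => 0
  | (k, c) :: t' => if k == s then c else sv_get t' s
  end.

Fixpoint sv_add (t : sv) (s : seq L) (c : nat) : sv :=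
  match t with
  | [::] => [:: (s, c)]
  | (k, d) :: t' => if k == s then (k, d + c) :: t'
                    else (k, d) :: sv_add t' s c
  end.

(* Cost model: each hash-table lookup/update, each visited vertex u, each
   visited neighbour v (adjacency lists), and each inspected table entry
   counts one step. *)

Definition upd_entry (u v : V) (acc : sv * nat) (sc : seq L * nat) : sv * nat :=
  if 0 < sc.2 then
    (sv_add acc.1 (tauV u :: tauE [set u; v] :: sc.1) sc.2, acc.2.+1)
  else (acc.1, acc.2.+1).

Definition upd_nb (Phi : V -> sv) (u : V) (acc : sv * nat) (v : V) : sv * nat :=
  foldl (upd_entry u v) (acc.1, acc.2.+1) (Phi v).

Definition new_vec (Phi : V -> sv) (u : V) : sv * nat :=
  foldl (upd_nb Phi u) ([::], 1) [seq v <- enum V | e u v].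

Fixpoint iter_phi (i : nat) : (V -> sv) * nat :=
  match i with
  | 0 => (fun v => [:: ([:: tauV v], 1)], #|V|)
  | i'.+1 =>
      let P := (iter_phi i').1 in
      (fun u => (new_vec P u).1, (iter_phi i').2 + \sum_(u : V) (new_vec P u).2)
  end.

Definition add_entry (acc : sv * nat) (sc : seq L * nat) : sv * nat :=
  (sv_add acc.1 sc.1 sc.2, acc.2.+1).

Definition sum_vecs (Phi : V -> sv) : sv * nat :=
  foldl (fun acc v => foldl add_entry (acc.1, acc.2.+1) (Phi v))
        ([::], 0) (enum V).

Definition walk_algo (l : nat) : sv := (sum_vecs (iter_phi l).1).1.

Definition walk_algo_cost (l : nat) : nat :=
  (iter_phi l).2 + (sum_vecs (iter_phi l).1).2.

End Walks.

(* Main.v *)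
Require Import Defs.
From mathcomp Require Import all_boot.
Set Implicit Arguments. Unset Strict Implicit. Unset Printing Implicit Defensive.

Section SV.
Variable L : finType.
Notation sv := (sv L).
Implicit Types (t a : sv) (k s : seq L) (c : nat) (ts : sv).

Definition keys (t : sv) := map fst t.
Definition addkc (a : sv) (kc : seq L * nat) := sv_add a kc.1 kc.2.
Definition allpos (t : sv) := all (fun kc => 0 < kc.2) t.

Lemma sv_get_add t k c s : sv_get (sv_add t k c) s = sv_get t s + (k == s) * c.
Proof.
elim: t => [|[k' d] t IH] /=; first by case: (k == s); rewrite ?mul1n ?mul0n.
case: (k' =P k) => [->|ne] /=.
  by case: (k == s); rewrite ?mul1n ?mul0n ?addn0.
rewrite IH; case: (k' =P s) => [eks|]; last by [].
subst; case: (k =P s) => [eks|]; last by rewrite mul0n addn0.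
by case: ne.
Qed.

Lemma keys_add_sub t k c : {subset keys (sv_add t k c) <= k :: keys t}.
Proof.
elim: t => [|[k' d] t IH] /= x; first by [].
case: eqP => [->|_] /=; first by rewrite !inE => ->; rewrite orbT.
rewrite !inE; case/orP => [->|/IH]; first by rewrite orbT.
by rewrite inE; case/orP => ->; rewrite ?orbT.
Qed.

Lemma uniq_add t k c : uniq (keys t) -> uniq (keys (sv_add t k c)).
Proof.
elim: t => [|[k' d] t IH] //=.
case/andP=> nk ut; case: eqP => [_|ne] /=; first by rewrite nk ut.
rewrite IH // andbT; apply/negP => /keys_add_sub; rewrite inE; case/orP.
  by move/eqP => ek; apply: ne; rewrite ek.
by rewrite (negbTE nk).
Qed.

Lemma pos_add t k c : 0 < c -> allpos t -> allpos (sv_add t k c).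
Proof.
move=> c0; elim: t => [|[k' d] t IH] /=; first by rewrite c0.
case/andP=> d0 pt; case: eqP => _ /=; first by rewrite addn_gt0 d0 pt.
by rewrite d0 IH.
Qed.

Lemma size_add t k c : size (sv_add t k c) <= (size t).+1.
Proof. by elim: t => [|[k' d] t IH] //=; case: eqP. Qed.

Lemma sum_uniq t s : uniq (keys t) ->
  \sum_(kc <- t) (kc.1 == s) * kc.2 = sv_get t s.
Proof.
elim: t => [|[k d] t IH] /=; first by rewrite big_nil.
case/andP => nk ut; rewrite big_cons /=; case: eqP => [eks|_]; last by rewrite IH.
subst; rewrite big_seq big1 ?addn0 ?mul1n //.
move=> [k' d'] H /=.
case: eqP => // ek; case/negP: nk; apply/mapP; exists (k', d') => //=.
Qed.

Lemma pos_get t k : allpos t -> k \in keys t -> 0 < sv_get t k.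
Proof.
elim: t => [|[k' d] t IH] //= /andP [d0 pt]; rewrite inE.
case: (k' =P k) => [->|nk] //=.
case/orP => [/eqP ek|]; [by case: nk | exact: IH].
Qed.

Lemma fold_get a ts s : sv_get (foldl addkc a ts) s =
   sv_get a s + \sum_(kc <- ts) (kc.1 == s) * kc.2.
Proof.
elim: ts a => [|kc ts IH] a /=; first by rewrite big_nil addn0.
by rewrite IH big_cons /addkc sv_get_add addnA.
Qed.

Lemma fold_uniq a ts : uniq (keys a) -> uniq (keys (foldl addkc a ts)).
Proof. by elim: ts a => [|kc ts IH] a //= ua; apply: IH; apply: uniq_add. Qed.

Lemma fold_pos a ts : allpos a -> allpos ts -> allpos (foldl addkc a ts).
Proof.
elim: ts a => [|kc ts IH] a //= pa /andP [k0 pts]; apply: IH => //.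
exact: pos_add.
Qed.

Lemma fold_size a ts : size (foldl addkc a ts) <= size a + size ts.
Proof.
elim: ts a => [|kc ts IH] a /=; first by rewrite addn0.
apply: leq_trans (IH _) _; rewrite addnS -addSn leq_add2r; exact: size_add.
Qed.

End SV.


Section Algo.
Variables (L V : finType) (e : rel V) (tauV : V -> L) (tauE : {set V} -> L).
Notation sv := (sv L).

Definition nbrs u := [seq v <- enum V | e u v].
Definition ext (u v : V) (kc : seq L * nat) := (tauV u :: tauE [set u; v] :: kc.1, kc.2).

Lemma upd_entry_fold u v (t : sv) a n : allpos t ->
  foldl (upd_entry tauV tauE u v) (a, n) t = (foldl (@addkc L) a (map (ext u v) t), n + size t).
Proof.
elim: t a n => [|kc t IH] a n /=; first by rewrite addn0.
case/andP => k0 pt; rewrite /upd_entry k0 /= IH // addSnnS //.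
Qed.

Lemma upd_nb_fold (Phi : V -> sv) u vs a n : (forall v, allpos (Phi v)) ->
  foldl (upd_nb tauV tauE Phi u) (a, n) vs =
  (foldl (@addkc L) a (flatten [seq map (ext u v) (Phi v) | v <- vs]),
   n + \sum_(v <- vs) (size (Phi v)).+1).
Proof.
move=> pP; elim: vs a n => [|v vs IH] a n /=; first by rewrite big_nil addn0.
have -> : upd_nb tauV tauE Phi u (a, n) v =
   (foldl (@addkc L) a (map (ext u v) (Phi v)), n.+1 + size (Phi v)).
  by rewrite /upd_nb /= upd_entry_fold.
by rewrite IH foldl_cat big_cons addSn -addnS addnA.
Qed.

Lemma new_vec_eq (Phi : V -> sv) u : (forall v, allpos (Phi v)) ->
  new_vec e tauV tauE Phi u =
  (foldl (@addkc L) [::] (flatten [seq map (ext u v) (Phi v) | v <- nbrs u]),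
   1 + \sum_(v <- nbrs u) (size (Phi v)).+1).
Proof. by move=> pP; rewrite /new_vec upd_nb_fold. Qed.

Lemma add_entry_fold (t : sv) (a : sv) m :
  foldl (@add_entry L) (a, m) t = (foldl (@addkc L) a t, m + size t).
Proof. by elim: t a m => [|kc t IHt] a' m /=; rewrite ?addn0 // IHt addSnnS. Qed.

Lemma sum_vecs_gen (Phi : V -> sv) vs (a : sv) n :
  foldl (fun acc v => foldl (@add_entry L) (acc.1, acc.2.+1) (Phi v)) (a, n) vs =
  (foldl (@addkc L) a (flatten [seq Phi v | v <- vs]),
                  n + \sum_(v <- vs) (size (Phi v)).+1).
Proof.
elim: vs a n => [|v vs IH] a n /=; first by rewrite big_nil addn0.
by rewrite add_entry_fold IH foldl_cat big_cons addSn -addnS addnA.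
Qed.

Lemma sum_vecs_eq (Phi : V -> sv) :
  sum_vecs Phi = (foldl (@addkc L) [::] (flatten [seq Phi v | v <- enum V]),
                  \sum_(v <- enum V) (size (Phi v)).+1).
Proof. by rewrite /sum_vecs sum_vecs_gen add0n. Qed.

End Algo.


Section Walks2.
Variables (L V : finType) (e : rel V) (tauV : V -> L) (tauE : {set V} -> L).

Fixpoint lab (u : V) (p : seq V) : seq L :=
  tauV u :: (if p is v :: p' then tauE [set u; v] :: lab v p' else [::]).

Lemma wlabel_lab v (p : seq V) :
  tauV v :: flatten [seq [:: tauE [set q.1; q.2]; tauV q.2] | q <- zip (v :: p) p] = lab v p.
Proof. by elim: p v => [|x p IH] v //=; rewrite -IH. Qed.

Fixpoint walks (i : nat) (u : V) : seq (seq V) :=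
  if i is i'.+1 then [seq v :: p | v <- nbrs e u, p <- walks i' v] else [:: [::]].

Lemma mem_walks i u p : (p \in walks i u) = (size p == i) && path e u p.
Proof.
elim: i u p => [|i IH] u p /=; first by case: p.
apply/allpairsPdep/idP.
  case=> v [q [vn qw ->]] /=; move: vn; rewrite mem_filter => /andP [-> _].
  by move: qw; rewrite IH eqSS.
case: p => [|v q] //=; rewrite eqSS => /andP [sq /andP [euv pq]].
exists v, q; split => //; first by rewrite mem_filter euv mem_enum.
by rewrite IH sq.
Qed.

Lemma uniq_walks i u : uniq (walks i u).
Proof.
elim: i u => [|i IH] u //=; apply: allpairs_uniq_dep.
- by rewrite filter_uniq // enum_uniq.
- by move=> v _; apply: IH.
- by move=> [x y] [x' y'] _ _ /= [-> ->].
Qed.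

Lemma tval_eta n (w : n.+1.-tuple V) : tval w = thead w :: behead w.
Proof. by case: w => [[|x s] H]. Qed.

Lemma card_walks i (P : V -> seq V -> bool) :
  #|[set w : i.+1.-tuple V | is_walk e w && P (thead w) (behead w)]| =
  \sum_(u <- enum V) count (P u) (walks i u).
Proof.
set A := [set w | _].
pose f (w : i.+1.-tuple V) := (thead w, behead (tval w)).
pose allw := [seq (u, p) | u <- enum V, p <- walks i u].
have finj : injective f.
  move=> w1 w2 [h1 h2]; apply: val_inj; by rewrite /= tval_eta h1 h2 -tval_eta.
have pe : perm_eq (map f (enum A)) (filter (fun x => P x.1 x.2) allw).
  apply: uniq_perm.
  - by rewrite (map_inj_uniq finj) enum_uniq.
  - rewrite filter_uniq //; apply: allpairs_uniq_dep.
    + exact: enum_uniq.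
    + by move=> v _; apply: uniq_walks.
    + by move=> [x y] [x' y'] _ _ /= [-> ->].
  move=> [u p]; rewrite mem_filter /=; apply/mapP/andP.
    case=> w; rewrite mem_enum inE => /andP [ww Pw] [-> ->]; split => //.
    apply/allpairsPdep; exists (thead w), (behead w); split => //.
      by rewrite mem_enum.
    by rewrite mem_walks size_behead size_tuple eqxx.
  case=> Pup /allpairsPdep [u' [p' [_ wp [eu ep]]]]; subst u p.
  move: wp; rewrite mem_walks => /andP [sp pp].
  exists [tuple of u' :: Tuple sp]; last by rewrite /f theadE.
  by rewrite mem_enum inE theadE /is_walk theadE /= pp Pup.
rewrite cardE. rewrite -(size_map f) (perm_size pe) size_filter -sum1_count.
rewrite big_mkcond /allw big_allpairs_dep /=; apply: eq_bigr => u _.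
by rewrite -sum1_count [RHS]big_mkcond.
Qed.

End Walks2.

From mathcomp Require Import zify.

Section Deg.
Variables (V : finType) (e : rel V).

Lemma sum_bool (T : finType) (B : pred T) : \sum_(p : T) (B p : nat) = #|[set p | B p]|.
Proof.
rewrite -sum1dep_card [RHS]big_mkcond; apply: eq_bigr => p _; by case: (B p).
Qed.

Lemma half_edges : \sum_(u : V) \sum_(v : V) (e u v && (enum_rank u < enum_rank v) : nat)
   <= nedges e.
Proof.
rewrite pair_big /= sum_bool.
set X := [set p : V * V | _].
have -> : #|X| = #|[set [set p.1; p.2] | p in X]|.
  rewrite card_in_imset // => [[x y] [x' y']]; rewrite !inE /= => /andP [_ lt1] /andP [_ lt2] H.
  have hx : x \in [set x'; y'] by rewrite -H set21.
  have hy : y \in [set x'; y'] by rewrite -H set22.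
  case/set2P: hx => ex; case/set2P: hy => ey; subst; try by [].
  1-3: exfalso; move: lt1 lt2; lia.
apply: subset_leq_card; apply/subsetP => _ /imsetP [[x y] + ->].
rewrite inE /= => /andP [exy _].
by apply/imset2P; exists x y; rewrite ?inE.
Qed.

Lemma deg_sum : symmetric e -> irreflexive e ->
  \sum_(u : V) size (nbrs e u) <= 2 * nedges e.
Proof.
move=> es ei.
have -> : \sum_(u : V) size (nbrs e u) =
   \sum_(u : V) \sum_(v : V) (e u v && (enum_rank u < enum_rank v) : nat) +
   \sum_(u : V) \sum_(v : V) (e v u && (enum_rank v < enum_rank u) : nat).
  rewrite -big_split; apply: eq_bigr => u _.
  rewrite -big_split /= /nbrs size_filter -sum1_count big_mkcond big_enum /=.
  apply: eq_bigr => v _; rewrite (es v u).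
  case: (boolP (e u v)) => //= euv.
  have nuv : u != v by apply: contraTneq euv => ->; rewrite ei.
  have : enum_rank u != enum_rank v by apply: contra nuv => /eqP/enum_rank_inj ->.
  move=> ne; case: ltngtP => // /val_inj eq; by rewrite eq eqxx in ne.
have h1 := half_edges.
have h2 : \sum_(u : V) \sum_(v : V) (e v u && (enum_rank v < enum_rank u) : nat) <= nedges e.
  by rewrite exchange_big.
lia.
Qed.

End Deg.


Section Inv.
Variables (L V : finType) (e : rel V) (tauV : V -> L) (tauE : {set V} -> L).

Notation lab := (lab tauV tauE).
Notation walks := (walks e).
Notation Phi i := (iter_phi e tauV tauE i).1.
Definition cnt i u (s : seq L) := \sum_(p <- walks i u) (lab u p == s : nat).

Lemma cons2_eq (a b : L) x s :
  (a :: b :: x == s) = ([:: a; b] == take 2 s) && (x == drop 2 s).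
Proof. by case: s => [|a' [|b' s']] //=; rewrite !eqseq_cons /= ?take0 ?drop0 ?andbF ?andbT ?andbA. Qed.

Lemma cnt0 u s : cnt 0 u s = ([:: tauV u] == s).
Proof. by rewrite /cnt big_cons big_nil addn0. Qed.

Lemma cntS i u s : cnt i.+1 u s =
  \sum_(v <- nbrs e u) ([:: tauV u; tauE [set u; v]] == take 2 s) * cnt i v (drop 2 s).
Proof.
rewrite /cnt /= big_allpairs_dep; apply: eq_bigr => v _.
rewrite big_distrr /=; apply: eq_bigr => p _; by rewrite cons2_eq mulnb.
Qed.

Lemma phi_inv i : forall u, [/\ allpos (Phi i u), uniq (keys (Phi i u)) &
                          forall s, sv_get (Phi i u) s = cnt i u s].
Proof.
elim: i => [|i IH] u.
  split => // s; rewrite cnt0 /=; by case: eqP.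
have pP : forall v, allpos (Phi i v) by move=> v; case: (IH v).
rewrite /= new_vec_eq //=.
have pF : allpos [seq ext tauV tauE u v y | v <- nbrs e u, y <- Phi i v].
  apply/all_allpairsP => v [k c] _ kin /=.
  by have := allP (pP v) _ kin.
split.
- by apply: fold_pos.
- by apply: fold_uniq.
move=> s; rewrite fold_get /= add0n big_allpairs_dep cntS; apply: eq_bigr => v _.
case: (IH v) => _ uv <-; rewrite -(sum_uniq _ uv) big_distrr /=.
by apply: eq_bigr => [[k c]] _ /=; rewrite cons2_eq mulnA mulnb.
Qed.

Lemma size_Phi_le i u : size (Phi i u) <= size (undup (map (lab u) (walks i u))).
Proof.
case: (phi_inv i u) => pu uu gu.
rewrite -(size_map fst); apply: uniq_leq_size => // k kin.
rewrite mem_undup; have := pos_get pu kin; rewrite gu /cnt.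
apply: contraLR => nk; rewrite -leqNgt leqn0; apply/eqP.
rewrite big1_seq // => p /andP [_ pw]; case: eqP => // ek.
by case/negP: nk; apply/mapP; exists p.
Qed.

Lemma size_PhiS i u : size (Phi i.+1 u) <= \sum_(v <- nbrs e u) size (Phi i v).
Proof.
have pP : forall v, allpos (Phi i v) by move=> v; case: (phi_inv i v).
rewrite /= new_vec_eq //=; apply: leq_trans (fold_size _ _) _.
by rewrite add0n size_allpairs_dep sumnE big_map.
Qed.


Lemma lab_rcons u p y : lab u (rcons p y) = lab u p ++ [:: tauE [set last u p; y]; tauV y].
Proof. by elim: p u => [|x p IH] u //=; rewrite IH. Qed.

Lemma size_lab u p : size (lab u p) = (size p).*2.+1.
Proof. by elim: p u => [|x p IH] u //=; rewrite IH doubleS. Qed.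

Lemma undup_map_size (T1 T2 : eqType) (f : T1 -> T2) s :
  size (undup (map f s)) <= size (undup s).
Proof.
rewrite -(size_map f); apply: uniq_leq_size; first exact: undup_uniq.
move=> x; rewrite mem_undup => /mapP [y ys ->]; apply: map_f; by rewrite mem_undup.
Qed.

Lemma undup_sub_size (T : eqType) (s1 s2 : seq T) :
  {subset s1 <= s2} -> size (undup s1) <= size (undup s2).
Proof.
move=> H; apply: uniq_leq_size; first exact: undup_uniq.
by move=> x; rewrite !mem_undup; apply: H.
Qed.

Definition Nl i u := size (undup (map (lab u) (walks i u))).

Lemma Nl_step (es : symmetric e) k v : 0 < k -> Nl k v <= Nl k.+1 v.
Proof.
move=> k0; rewrite /Nl.
apply: leq_trans (undup_map_size (take (k.*2.+1)) _).
apply: undup_sub_size => _ /mapP [p pw ->].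
move: pw; rewrite mem_walks => /andP [/eqP sp pp].
case/lastP: p sp pp => [|q x] sp pp; first by rewrite -sp in k0.
rewrite -map_comp; apply/mapP; exists (rcons (rcons q x) (last v q)).
  rewrite mem_walks size_rcons sp eqxx /= rcons_path pp /= last_rcons.
  by move: pp; rewrite rcons_path => /andP [_]; rewrite es.
rewrite /=.
have -> : k.*2.+1 = size (lab v (rcons q x)) by rewrite size_lab sp.
by rewrite [X in take _ X]lab_rcons take_size_cat.
Qed.

Lemma Nl_mono (es : symmetric e) i j v : 0 < i -> i <= j -> Nl i v <= Nl j v.
Proof.
move=> i0; elim: j => [|j IH]; first by rewrite leqn0 => /eqP i00; rewrite i00 in i0.
rewrite leq_eqVlt => /orP [/eqP -> //| ij].
by apply: leq_trans (IH ij) (Nl_step es v _); apply: leq_trans i0 ij.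
Qed.

Lemma wlabelE k (w : k.+1.-tuple V) : wlabel tauV tauE w = lab (thead w) (behead w).
Proof. by rewrite /wlabel wlabel_lab. Qed.

Lemma nlab_eq k v : nlabseq_from e tauV tauE k v = Nl k v.
Proof.
rewrite /nlabseq_from /Nl; apply: perm_size; apply: uniq_perm; try exact: undup_uniq.
move=> s; rewrite !mem_undup; apply/mapP/mapP.
  case=> w; rewrite mem_enum inE => /andP [ww /eqP hw] ->.
  exists (behead w); last by rewrite wlabelE hw.
  by rewrite mem_walks size_behead size_tuple eqxx -hw.
case=> p; rewrite mem_walks => /andP [sp pp] ->.
exists [tuple of v :: Tuple sp]; last by rewrite wlabelE theadE.
by rewrite mem_enum inE /is_walk theadE /= pp eqxx.
Qed.

Lemma phi_eq_cnt l s : phi_eq e tauV tauE l s = \sum_(u <- enum V) cnt l u s.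
Proof.
rewrite /phi_eq.
have -> : [set w : l.+1.-tuple V | is_walk e w && (wlabel tauV tauE w == s)] =
          [set w : l.+1.-tuple V | is_walk e w && (fun u p => lab u p == s) (thead w) (behead w)].
  by apply/setP => w; rewrite !inE wlabelE.
etransitivity; first exact: (card_walks e l (fun u p => lab u p == s)).
apply: eq_bigr => u _.
by rewrite /cnt -sum1_count big_mkcond; apply: eq_bigr => p _; case: eqP.
Qed.

End Inv.


Section Final.
Variables (L V : finType) (e : rel V) (tauV : V -> L) (tauE : {set V} -> L).
Notation Phi i := (iter_phi e tauV tauE i).1.

Lemma sum_le_seq (T : Type) (s : seq T) (F : T -> nat) c :
  (forall x, F x <= c) -> \sum_(x <- s) F x <= size s * c.
Proof.
move=> H; elim: s => [|x s IH]; first by rewrite big_nil.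
by rewrite big_cons /= mulSn leq_add.
Qed.

Lemma correct l s : sv_get (walk_algo e tauV tauE l) s = phi_eq e tauV tauE l s.
Proof.
rewrite /walk_algo sum_vecs_eq /= fold_get /= add0n big_flatten big_map phi_eq_cnt.
apply: eq_bigr => v _; case: (phi_inv e tauV tauE l v) => _ uv <-.
by rewrite sum_uniq.
Qed.

Hypothesis es : symmetric e.

Lemma size_bound l i v : i < l -> size (Phi i v) <= smax e tauV tauE l.
Proof.
move=> il; case: i il => [|i] il; first by rewrite /smax leq_maxl.
apply: leq_trans (size_Phi_le _ _ _ _ _) _.
apply: leq_trans (Nl_mono tauV tauE es v (ltn0Sn i) (_ : i.+1 <= l.-1)) _.
  by case: l il.
rewrite -nlab_eq /smax; apply: leq_trans (leq_maxr _ _).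
exact: leq_bigmax.
Qed.

Definition Dg := \sum_(u : V) size (nbrs e u).

Lemma step_cost l i : i < l ->
  \sum_(u : V) (new_vec e tauV tauE (Phi i) u).2 <= #|V| + Dg * (smax e tauV tauE l).+1.
Proof.
move=> il.
have pP : forall v, allpos (Phi i v) by move=> v; case: (phi_inv e tauV tauE i v).
have H : forall u, (new_vec e tauV tauE (Phi i) u).2 <= 1 + size (nbrs e u) * (smax e tauV tauE l).+1.
  move=> u; rewrite new_vec_eq //= leq_add2l; apply: sum_le_seq => v.
  by rewrite ltnS size_bound.
apply: leq_trans; first by apply: leq_sum => u _; exact: H u.
by rewrite big_split /= sum1_card /Dg big_distrl.
Qed.

Lemma iter_cost l i : i <= l ->
  (iter_phi e tauV tauE i).2 <= #|V| + i * (#|V| + Dg * (smax e tauV tauE l).+1).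
Proof.
elim: i => [|i IH] il; first by rewrite /= addn0.
rewrite /=; have := IH (ltnW il); have := step_cost il; rewrite mulSn => h1 h2.
apply: leq_trans (leq_add h2 h1) _; by rewrite -addnA leq_add2l addnC.
Qed.

Lemma sum_cost l :
  (sum_vecs (Phi l)).2 <= #|V| + (0 < l) * (#|V| + Dg * (smax e tauV tauE l).+1) + #|V|.
Proof.
rewrite sum_vecs_eq /=.
case: l => [|i].
  by rewrite /= cardT; elim: (enum V) => [|x s IH]; rewrite ?big_nil ?big_cons //=; lia.
have pP : forall v, allpos (Phi i v) by move=> v; case: (phi_inv e tauV tauE i v).
have H : forall v, (size (Phi i.+1 v)).+1 <= 1 + (new_vec e tauV tauE (Phi i) v).2.
  move=> v; rewrite add1n ltnS; apply: leq_trans (size_PhiS _ _ _ _ _) _.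
  rewrite new_vec_eq //= add1n; apply: leqW; apply: leq_sum => w _; exact: leqnSn.
apply: leq_trans; first by apply: leq_sum => v _; exact: H v.
rewrite big_split /= sum1_size -cardT big_enum /= mul1n.
rewrite (eq_bigl (fun _ => true)) //.
have h := step_cost (ltnSn i).
rewrite -addnA leq_add2l; apply: leq_trans h _; exact: leq_addr.
Qed.

End Final.

Theorem theorem2 :
  exists c : nat,
  forall (L V : finType) (e : rel V) (tauV : V -> L) (tauE : {set V} -> L)
         (l : nat),
    symmetric e -> irreflexive e ->
    (forall s : seq L, sv_get (walk_algo e tauV tauE l) s = phi_eq e tauV tauE l s)
    /\
    walk_algo_cost e tauV tauE l <=
      c * (nverts V + l * (nverts V + nedges e) * smax e tauV tauE l).
Proof.
exists 8 => L V e tauV tauE l es ei; split; first exact: correct.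
rewrite /walk_algo_cost /nverts.
have h1 := iter_cost tauV tauE es (leqnn l).
have h2 := sum_cost tauV tauE es l.
have hD := deg_sum es ei.
rewrite -/(Dg e) in hD.
have hS : 0 < smax e tauV tauE l by rewrite /smax leq_max.
set S := smax e tauV tauE l in h1 h2 hS *.
set n := #|V| in h1 h2 *.
set m := nedges e in hD *.
set D := Dg e in h1 h2 hD.
set K := n + D * S.+1 in h1 h2.
have hK : K <= 4 * ((n + m) * S).
  have a1 : n <= n * S by rewrite leq_pmulr.
  have a2 : D * S.+1 <= (2 * m) * (2 * S) by apply: leq_mul; [exact: hD | lia].
  rewrite /K; nia.
have hl : (0 < l) * K <= l * K by case: (posnP l) => [->|lp] //; rewrite /= mul1n leq_pmull.
have hlK : l * K <= l * (4 * ((n + m) * S)) by rewrite leq_mul2l hK orbT.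
nia.
Qed.
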